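(* Let $n\ge1$. Then there is a recurrent GNN such that for all graphs $G,G'$ of order at most $n$, if $\mathrm{CR}^{(\infty)}$ distinguishes $G$ and $G'$ then $\xi(G)\ne\xi(G')$, where $\xi$ is the graph invariant computed by the GNN in $n$ iterations.
   Context: Graphs are finite, undirected, simple, with a fixed number $\ell$ of vertex labels; $\mathrm{col}(G,v)\in\{0,1\}^\ell$ is the label indicator vector; $N^G(v)$ the neighbourhood; the order of $G$ is $|V(G)|$. Colour refinement: $\mathrm{CR}^{(0)}(G,v)=\mathrm{col}(G,v)$, $\mathrm{CR}^{(t+1)}(G,v)=\big(\mathrm{CR}^{(t)}(G,v),\{\!\{\mathrm{CR}^{(t)}(G,w):w\in N^G(v)\}\!\}\big)$ (formal colours comparable across graphs); $\mathrm{CR}^{(\infty)}(G)=\mathrm{CR}^{(t_\infty)}(G)$ with $t_\infty$ least such that steps $t_\infty$ and $t_\infty+1$ induce the same partition of $V(G)$. $\mathrm{CR}^{(\infty)}$ distinguishes $G,G'$ if $\{\!\{\mathrm{CR}^{(\infty)}(G,v):v\in V(G)\}\!\}\ne\{\!\{\mathrm{CR}^{(\infty)}(G',v'):v'\in V(G')\}\!\}$. A recurrent GNN of dimension $q\ge\ell$ consists of one layer with sum aggregation: it maps a feature map $\zeta:V(G)\to\mathbb{R}^q$ to $\eta(v)=\mathrm{comb}\big(\zeta(v),\sum_{w\in N^G(v)}\zeta(w)\big)$, where $\mathrm{comb}:\mathbb{R}^{2q}\to\mathbb{R}^q$ is computed by a feedforward neural network (layers $\vec x\mapsto\sigma(A\vec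 x+\vec b)$ with continuous activation functions $\sigma$ applied pointwise), together with an aggregate readout function mapping finite multisets of vectors in $\mathbb{R}^q$ to an output space, given by summation followed by a function computed by a feedforward neural network. On $G$, starting from $\zeta^{(0)}(v)=\mathrm{col}(G,v)$ padded with zeros, iterating the layer gives $\zeta^{(1)},\zeta^{(2)},\dots$; the graph invariant computed in $n$ iterations is $\xi(G)=\mathrm{aggro}(\{\!\{\zeta^{(n)}(v):v\in V(G)\}\!\})$. *)

(* Defs.v *)
From HB Require Import structures.
From mathcomp Require Import all_boot all_order all_algebra.
From mathcomp Require Import all_classical all_reals all_analysis.
From mathcomp Require Import finmap multiset.

Set Implicit Arguments.
Unset Strict Implicit.
Unset Printing Implicit Defensive.

Import Order.TTheory GRing.Theory Num.Theory.
Import numFieldNormedType.Exports.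
Local Open Scope ring_scope.

(* A finite, undirected, simple graph: symmetric irreflexive adjacency on a finite
   vertex type; lab v is the label indicator vector col(G,v) in {0,1}^l. *)
Record graph (l : nat) := Graph {
  vert : finType;
  adj : rel vert;
  adj_sym : symmetric adj;
  adj_irr : irreflexive adj;
  lab : vert -> {ffun 'I_l -> bool}
}.

Fixpoint crT (l t : nat) : choiceType :=
  match t with
  | 0 => {ffun 'I_l -> bool}
  | t'.+1 => (crT l t' * multiset (crT l t'))%type
  end.

Fixpoint CR (l : nat) (G : graph l) (t : nat) : vert G -> crT l t :=
  match t return vert G -> crT l t with
  | 0 => fun v => lab v
  | t'.+1 => fun v =>
      (CR t' v, seq_mset [seq CR t' w | w <- enum (vert G) & adj v w])
  end.

Definition cr_stable (l : nat) (G : graph l) (t : nat) : Prop :=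
  forall v w : vert G, (@CR l G t v == @CR l G t w) = (@CR l G t.+1 v == @CR l G t.+1 w).

Definition is_tinf (l : nat) (G : graph l) (t : nat) : Prop :=
  cr_stable G t /\ forall s, (s < t)%N -> ~ cr_stable G s.

(* the multiset {{ CR^(t)(G,v) : v in V(G) }}, colours tagged with their round
   so that colours of different rounds are comparable (and distinct) formal objects *)
Definition cr_mset (l : nat) (G : graph l) (t : nat) : multiset {s : nat & crT l s} :=
  seq_mset [seq (existT (fun s => crT l s) t (@CR l G t v)) | v <- enum (vert G)].

Definition CRinf_distinguishes (l : nat) (G G' : graph l) : Prop :=
  exists t t', is_tinf G t /\ is_tinf G' t' /\ cr_mset G t <> cr_mset G' t'.

Inductive fnn_fun (R : realType) : forall p r : nat, ('cV[R]_p -> 'cV[R]_r) -> Prop :=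
| FNNLayer p r (A : 'M[R]_(r, p)) (b : 'cV[R]_r) (sigma : R -> R) :
    continuous sigma -> @fnn_fun R p r (fun x => map_mx sigma (A *m x + b))
| FNNComp p r s (f : 'cV[R]_p -> 'cV[R]_r) (g : 'cV[R]_r -> 'cV[R]_s) :
    @fnn_fun R p r f -> @fnn_fun R r s g -> @fnn_fun R p s (g \o f).

Record rgnn (R : realType) (l : nat) := RGNN {
  gq : nat;
  gq_ge : (l <= gq)%N;
  gcomb : 'cV[R]_(gq + gq) -> 'cV[R]_gq;
  gcomb_fnn : fnn_fun gcomb;
  gout : nat;
  gro : 'cV[R]_gq -> 'cV[R]_gout;
  gro_fnn : fnn_fun gro
}.

Definition zeta0 (R : realType) (l q : nat) (G : graph l) (v : vert G) : 'cV[R]_q :=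
  \col_(i < q) (if (insub (nat_of_ord i) : option 'I_l) is Some j
                then ((lab v j : nat)%:R : R) else 0).

Definition zeta (R : realType) (l : nat) (N : rgnn R l) (G : graph l)
  : nat -> vert G -> 'cV[R]_(gq N) :=
  fix z (k : nat) : vert G -> 'cV[R]_(gq N) :=
  match k with
  | 0 => @zeta0 R l (gq N) G
  | k'.+1 => fun v =>
      @gcomb R l N (col_mx (z k' v) (\sum_(w : vert G | adj v w) z k' w))
  end.

Definition xi (R : realType) (l : nat) (N : rgnn R l) (k : nat) (G : graph l)
  : 'cV[R]_(gout N) :=
  @gro R l N (\sum_(v : vert G) @zeta R l N G k v).

(* Main.v *)
Require Import Defs.
From HB Require Import structures.
From mathcomp Require Import all_boot all_order all_algebra.
From mathcomp Require Import all_classical all_reals all_analysis.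
From mathcomp Require Import finmap multiset.
From mathcomp Require Import ring lra zify.
Set Implicit Arguments.
Unset Strict Implicit.
Unset Printing Implicit Defensive.
Import Order.TTheory GRing.Theory Num.Theory.
Import numFieldNormedType.Exports.


Lemma digits (B M : nat) (c c' : nat -> nat) : 0 < B ->
  (forall j, c j < B) -> (forall j, c' j < B) ->
  \sum_(j < M) c j * B ^ j = \sum_(j < M) c' j * B ^ j ->
  forall j, j < M -> c j = c' j.
Proof.
move=> B0; elim: M c c' => [|M IH] c c' hc hc' E j //.
move: E; rewrite !big_ord_recl /= !expn0 !muln1.
have sh : forall d : nat -> nat, \sum_(i < M) d (bump 0 i) * B ^ bump 0 i
   = B * \sum_(i < M) d i.+1 * B ^ i.
  move=> d; rewrite big_distrr /=; apply: eq_bigr => i _.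
  by rewrite /bump /= add1n expnS mulnCA.
rewrite !sh => E.
have E0 : c 0 = c' 0.
  have md : forall a X, a < B -> (a + B * X) %% B = a.
    by move=> a X aB; rewrite addnC mulnC modnMDl modn_small.
  by have := congr1 (modn^~ B) E; rewrite /= !md.
move: E; rewrite E0 => /eqP; rewrite eqn_add2l eqn_pmul2l // => /eqP E.
case: j => [|j] // jM.
exact: (IH (fun i => c i.+1) (fun i => c' i.+1)).
Qed.

Definition sumB (B : nat) (s : seq nat) := sumn (map (expn B) s).

Lemma sumB_count (B M : nat) (s : seq nat) : all (fun x => x < M) s ->
  sumB B s = \sum_(j < M) count_mem (j : nat) s * B ^ j.
Proof.
rewrite /sumB; elim: s => [|a s IH].
  by move=> _; rewrite big1.
rewrite [all _ _]/= => /andP[aM hs]; rewrite [map _ _]/= [sumn _]/= (IH hs).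
have -> : \sum_(j < M) count_mem (j : nat) (a :: s) * B ^ j =
   \sum_(j < M) ((a == j) * B ^ j + count_mem (j : nat) s * B ^ j).
  by apply: eq_bigr => j _; rewrite /= mulnDl.
rewrite big_split; congr (_ + _).
rewrite (bigD1 (Ordinal aM)) //= eqxx mul1n big1 ?addn0 // => i /negP ne.
case: eqP => [e|]; last by rewrite mul0n.
by exfalso; apply: ne; apply/eqP; apply: val_inj; rewrite /= e.
Qed.

Lemma sumB_perm (B : nat) (s s' : seq nat) : size s < B -> size s' < B ->
  sumB B s = sumB B s' -> perm_eq s s'.
Proof.
move=> hs hs' E.
set M := (\max_(x <- s ++ s') x).+1.
have hM : forall x, x \in s ++ s' -> x < M.
  by move=> x xs; rewrite ltnS; apply: leq_bigmax_seq.
have aM : all (fun x => x < M) s.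
  by apply/allP => x xs; apply: hM; rewrite mem_cat xs.
have aM' : all (fun x => x < M) s'.
  by apply/allP => x xs; apply: hM; rewrite mem_cat xs orbT.
move: E; rewrite (sumB_count B aM) (sumB_count B aM') => E.
have B0 : 0 < B by apply: leq_ltn_trans (leq0n _) hs.
have D := digits (c := fun j => count_mem j s) (c' := fun j => count_mem j s') B0
   (fun j => leq_ltn_trans (count_size _ _) hs)
   (fun j => leq_ltn_trans (count_size _ _) hs') E.
rewrite /perm_eq; apply/allP => x xs; apply/eqP; apply: D; exact: hM.
Qed.

Lemma perm_transfer (T T' : eqType) (X : eqType) (f : T -> nat) (f' : T' -> nat)
  (g : T -> X) (g' : T' -> X) (s : seq T) (s' : seq T') :
  (forall a b, a \in s -> b \in s' -> f a = f' b -> g a = g' b) ->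
  perm_eq (map f s) (map f' s') -> perm_eq (map g s) (map g' s').
Proof.
elim: s s' => [|a s IH] s' H P.
  by move: (perm_size P); case: s' {H P} => //.
have : f a \in map f' s' by rewrite -(perm_mem P) inE eqxx.
case/mapP => b bs fab.
have Pb := perm_to_rem bs.
have P2 : perm_eq (map f s) (map f' (rem b s')).
  rewrite -(perm_cons (f a)); apply: (perm_trans P).
  by rewrite fab; exact: (perm_map f' Pb).
have IH2 := IH (rem b s') (fun x y xs ys => H x y (mem_behead (x:=x) (s:=a::s) xs) (mem_rem ys)) P2.
have gab : g a = g' b.
  by apply: H; [exact: mem_head | exact: bs | first [exact: fab | exact: (esym fab)]].
rewrite /= gab.
have Pb' : perm_eq (b :: rem b s') s' by rewrite perm_sym.
apply: (perm_trans _ (perm_map g' Pb')).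
by rewrite /= perm_cons.
Qed.

Lemma pair_inj (K a a' y y' S S' : nat) : a < K -> a' < K ->
  a ^ 2 + K ^ 2 * ((y + S) ^ 2 + S) = a' ^ 2 + K ^ 2 * ((y' + S') ^ 2 + S') ->
  [/\ a = a', y = y' & S = S'].
Proof.
move=> aK aK' E.
have a2 : a ^ 2 < K ^ 2 by rewrite ltn_exp2r.
have a2' : a' ^ 2 < K ^ 2 by rewrite ltn_exp2r.
have E1 : (y + S) ^ 2 + S = (y' + S') ^ 2 + S'.
  have := congr1 (divn^~ (K ^ 2)) E; rewrite /= !(mulnC (K ^ 2)).
  have K2 : 0 < K ^ 2 by rewrite expn_gt0 (leq_ltn_trans (leq0n a) aK).
  by rewrite !divnDMl // !divn_small.
have E2 : a ^ 2 = a' ^ 2 by move: E; rewrite E1 => /eqP; rewrite eqn_add2r => /eqP.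
have Ea : a = a' by apply: sqrn_inj.
have Em : y + S = y' + S'.
  case: (ltngtP (y + S) (y' + S')) => // h; exfalso.
  - have : (y + S) ^ 2 + S < (y' + S') ^ 2 + S'; last by rewrite E1 ltnn.
    apply: (@leq_trans ((y + S).+1 ^ 2)); first by rewrite -addn1 sqrnD ?exp1n ?muln1; lia.
    by rewrite (leq_trans _ (leq_addr _ _)) // leq_exp2r.
  - have : (y' + S') ^ 2 + S' < (y + S) ^ 2 + S; last by rewrite E1 ltnn.
    apply: (@leq_trans ((y' + S').+1 ^ 2)); first by rewrite -addn1 sqrnD ?exp1n ?muln1; lia.
    by rewrite (leq_trans _ (leq_addr _ _)) // leq_exp2r.
have ES : S = S' by move: E1; rewrite Em => /eqP; rewrite eqn_add2l => /eqP.
split=> //; lia.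
Qed.

Section Count.
Variables (l : nat) (G : graph l).
Local Notation V := (vert G).

Definition cls (s : nat) (v : V) : {set V} := [set w | @CR l G s w == @CR l G s v].
Definition classes (s : nat) : {set {set V}} := [set cls s v | v : V].
Definition hmap (s : nat) (C : {set V}) : {set V} :=
  [set w | [exists v in C, @CR l G s w == @CR l G s v]].

Lemma CR_fst s v : (@CR l G s.+1 v).1 = @CR l G s v.
Proof. by []. Qed.

Lemma hmap_cls s v : hmap s (cls s.+1 v) = cls s v.
Proof.
apply/setP => w; rewrite !inE; apply/existsP/idP.
- case=> v' /andP[]; rewrite inE => /eqP e /eqP ->.
  by rewrite -(CR_fst s v') -(CR_fst s v) e.
- by move=> e; exists v; rewrite inE eqxx.
Qed.

Lemma classes_h s : classes s = hmap s @: classes s.+1.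
Proof.
rewrite /classes -imset_comp; apply: eq_imset => v /=; by rewrite hmap_cls.
Qed.

Lemma classes_le s : #|classes s| <= #|classes s.+1|.
Proof. by rewrite classes_h leq_imset_card. Qed.

Lemma classes_eq_stable s : #|classes s| = #|classes s.+1| -> cr_stable G s.
Proof.
rewrite classes_h => /eqP /imset_injP inj v w.
apply/idP/idP; last first.
  by move=> /eqP e; rewrite -(CR_fst s v) -(CR_fst s w) e.
move=> e.
have : cls s.+1 v = cls s.+1 w.
  apply: inj; try by apply/imsetP; eexists.
  apply: (etrans (hmap_cls s v)); apply: esym; apply: (etrans (hmap_cls s w)).
  by apply/setP => u; rewrite /cls !finset.in_set (eqP e).
move=> E.
have : v \in cls s.+1 v by rewrite /cls finset.in_set.
by rewrite E /cls finset.in_set.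
Qed.

Lemma classes_lt s : ~ cr_stable G s -> #|classes s| < #|classes s.+1|.
Proof.
move=> ns; rewrite ltn_neqAle classes_le andbT; apply/negP => /eqP e.
by apply: ns; apply: classes_eq_stable.
Qed.

Lemma classes_card s : #|classes s| <= #|V|.
Proof. by rewrite /classes (leq_trans (leq_imset_card _ _)) // ?max_card. Qed.

Lemma tinf_lt n t : (1 <= n)%N -> #|V| <= n -> is_tinf G t -> t < n.
Proof.
move=> n1 Vn [st mn].
case: (posnP #|V|) => V0.
  case: (posnP t) => [-> //|t0].
  exfalso; apply: (mn 0 t0) => v; move: (card0_eq V0 v); by rewrite inE.
have pos : forall s, 0 < #|classes s|.
  move=> s; case/card_gt0P: V0 => v _; apply/card_gt0P; exists (cls s v).
  by apply/imsetP; exists v.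
have : forall s, s <= t -> s < #|classes s|.
  elim=> [|s IH] // st1.
  apply: leq_trans (classes_lt (mn s st1)); rewrite ltnS; apply: IH; exact: ltnW.
move=> /(_ t (leqnn t)) h.
by apply: leq_trans Vn; apply: leq_trans (classes_card t).
Qed.

End Count.

Definition Pst (l s : nat) (L : seq (crT l s.+1)) : Prop :=
  forall a b : crT l s.+1, a \in L -> b \in L -> ((a.1 == b.1) = (a == b)).

Lemma stable_Pst l (G : graph l) s :
  cr_stable G s <-> Pst (map (@CR l G s.+1) (enum (vert G))).
Proof.
split.
- move=> st a b /mapP[v _ ->] /mapP[w _ ->]; by rewrite !CR_fst st.
- move=> P v w; rewrite -(CR_fst s v) -(CR_fst s w); apply: P; apply: map_f; by rewrite mem_enum.
Qed.

Lemma stable_perm l (G G' : graph l) s :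
  perm_eq (map (@CR l G s.+1) (enum (vert G))) (map (@CR l G' s.+1) (enum (vert G'))) ->
  (cr_stable G s <-> cr_stable G' s).
Proof.
move=> P; rewrite !stable_Pst; split => H a b ha hb; apply: H.
- by rewrite (perm_mem P).
- by rewrite (perm_mem P).
- by rewrite -(perm_mem P).
- by rewrite -(perm_mem P).
Qed.

Lemma not_distinguished l (G G' : graph l) n : (1 <= n)%N ->
  #|vert G| <= n -> #|vert G'| <= n ->
  (forall s, s < n -> perm_eq (map (@CR l G s) (enum (vert G))) (map (@CR l G' s) (enum (vert G')))) ->
  ~ CRinf_distinguishes G G'.
Proof.
move=> n1 hG hG' P [t [t' [ht [ht' D]]]].
have tn := tinf_lt n1 hG ht; have tn' := tinf_lt n1 hG' ht'.
have ett : t = t'.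
  case: (ltngtP t t') => // h; exfalso.
  - apply: (ht'.2 t h); apply/(stable_perm (P t.+1 (leq_ltn_trans h tn'))); exact: ht.1.
  - apply: (ht.2 t' h); apply/(stable_perm (P t'.+1 (leq_ltn_trans h tn))); exact: ht'.1.
subst t'; apply: D; apply/eq_seq_msetP.
rewrite !(map_comp (existT (fun s => crT l s) t) (@CR l _ t)).
by apply: perm_map; apply: P.
Qed.

Section GNN.
Variables (R : realType) (l n : nat).
Local Open Scope ring_scope.

Definition BB : nat := n.+1.
Definition KK : nat := (\sum_(j < l.+1) 2 ^ j)%N.+1.

Definition A1u : 'M[R]_(4, l.+1) := \matrix_(i, j)
  (if (i == 0%N :> nat) then (if (j == l :> nat) then 1 else 0)
   else if (i == 3%N :> nat) then (if (j < l)%N then 2 ^+ j else 0) else 0).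
Definition A1d : 'M[R]_(4, l.+1) := \matrix_(i, j)
  (if (i < 3)%N && (j == l :> nat) then 1 else 0).
Definition b1 : 'cV[R]_4 := \col_i (if (i == 1%N :> nat) then 1 else 0).
Definition cf (j : nat) : R :=
  if j == 0%N then KK%:R ^+ 2 else if j == 1%N then KK%:R ^+ 2 / 2
  else if j == 2%N then - (KK%:R ^+ 2 / 2) else 1.
Definition A2 : 'M[R]_(1, 4) := \matrix_(i, j) (cf j * ln (BB%:R : R)).
Definition b2 : 'cV[R]_1 := \col_i ((1 - KK%:R ^+ 2 / 2) * ln (BB%:R : R)).
Definition A3 : 'M[R]_(l.+1, 1) := \matrix_(i, j) (if (i == l :> nat) then 1 else 0).

Definition lay1 (x : 'cV[R]_(l.+1 + l.+1)) : 'cV[R]_4 :=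
  map_mx (fun t => t ^+ 2) (row_mx A1u A1d *m x + b1).
Definition lay2 (u : 'cV[R]_4) : 'cV[R]_1 := map_mx expR (A2 *m u + b2).
Definition lay3 (e : 'cV[R]_1) : 'cV[R]_(l.+1) := map_mx id (A3 *m e + 0).

Definition comb := lay3 \o (lay2 \o lay1).

Lemma comb_fnn : fnn_fun comb.
Proof.
apply: FNNComp; last by apply: FNNLayer => x; exact: cvg_id.
apply: FNNComp; first by apply: FNNLayer; exact: exprn_continuous.
by apply: FNNLayer; exact: continuous_expR.
Qed.

Definition gro (x : 'cV[R]_(l.+1)) : 'cV[R]_(l.+1) := map_mx expR (1%:M *m x + 0).
Lemma gro_fnn : fnn_fun gro.
Proof. by apply: FNNLayer; exact: continuous_expR. Qed.

Definition theN : rgnn R l := @RGNN R l l.+1 (leqnSn l) comb comb_fnn l.+1 gro gro_fnn.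

Definition aR (x : 'cV[R]_(l.+1)) : R := \sum_(j < l.+1) (if (j < l)%N then 2 ^+ j else 0) * x j 0.

Lemma sum_sel_aux : True. Proof. by []. Qed.
Lemma sum_sel (f : 'I_l.+1 -> R) (c : R) :
  \sum_(j < l.+1) (if (j == l :> nat) then c else 0) * f j = c * f ord_max.
Proof.
rewrite (bigD1 ord_max) //= eqxx big1 ?addr0 // => j ne.
case: eqP => [e|]; last by rewrite mul0r.
by exfalso; move: ne; rewrite -(inj_eq val_inj) /= e eqxx.
Qed.

Definition zR (x s : 'cV[R]_(l.+1)) : R :=
  KK%:R ^+ 2 * (x ord_max 0 + s ord_max 0) ^+ 2
  + KK%:R ^+ 2 / 2 * (s ord_max 0 + 1) ^+ 2
  - KK%:R ^+ 2 / 2 * (s ord_max 0) ^+ 2 + aR x ^+ 2 + (1 - KK%:R ^+ 2 / 2).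

Lemma lay1E x s (i : 'I_4) : lay1 (col_mx x s) i 0 =
  (if (i == 0%N :> nat) then x ord_max 0 + s ord_max 0
   else if (i == 1%N :> nat) then s ord_max 0 + 1
   else if (i == 2%N :> nat) then s ord_max 0 else aR x) ^+ 2.
Proof.
rewrite /lay1 mxE mul_row_col !mxE; congr (_ ^+ 2).
under eq_bigr do rewrite mxE.
under [X in _ + X + _]eq_bigr do rewrite mxE.
have s0 : forall f : 'I_l.+1 -> R, \sum_(j < l.+1) 0 * f j = 0.
  by move=> f; rewrite big1 // => j _; rewrite mul0r.
case: i => [[|[|[|[|i]]]] Hi] //=.
all: rewrite ?s0 ?(sum_sel (fun j => x j 0)) ?(sum_sel (fun j => s j 0)) ?mul1r.
all: by rewrite ?add0r ?addr0.
Qed.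

Lemma combE x s (i : 'I_l.+1) : comb (col_mx x s) i 0 =
  if (i == l :> nat) then expR (zR x s * ln (BB%:R : R)) else 0.
Proof.
rewrite /comb /= /lay3 !mxE big_ord1 addr0 /lay2 !mxE.
have -> : \sum_(j < 4) A2 ord0 j * lay1 (col_mx x s) j 0 + (1 - KK%:R ^+ 2 / 2) * ln (BB%:R : R) = zR x s * ln (BB%:R : R).
  rewrite !big_ord_recl big_ord0 !lay1E !mxE /=.
  rewrite /cf /zR /=; ring.
by case: eqP; rewrite ?mul1r ?mul0r.
Qed.

Definition labnat (G : graph l) (v : vert G) (j : nat) : nat :=
  if (insub j : option 'I_l) is Some j' then nat_of_bool (lab v j') else 0%N.
Definition Lnat (G : graph l) (v : vert G) : nat := (\sum_(j < l.+1) labnat v j * 2 ^ j)%N.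
Definition Fnat (a y S : nat) : nat := (a ^ 2 + KK ^ 2 * ((y + S) ^ 2 + S) + 1)%N.
Fixpoint ynat (G : graph l) (k : nat) : vert G -> nat :=
  match k with
  | 0 => fun _ => 0%N
  | k'.+1 => fun v => (BB ^ Fnat (if k' is 0 then Lnat v else 0%N) (@ynat G k' v)
                         (\sum_(w | adj v w) @ynat G k' w))%N
  end.
Arguments ynat : clear implicits.
Definition aval (G : graph l) (k : nat) (v : vert G) : nat := if k is 0 then Lnat v else 0%N.
Definition ex (G : graph l) (k : nat) (v : vert G) : nat :=
  Fnat (aval k v) (ynat G k v) (\sum_(w | adj v w) ynat G k w).
Arguments ex : clear implicits.
Lemma ynatS G k v : ynat G k.+1 v = (BB ^ ex G k v)%N.
Proof. by []. Qed.

Lemma zeta_inv (G : graph l) k v :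
  aR ((@zeta R l theN G k v)) = (aval k v)%:R /\
  (@zeta R l theN G k v) ord_max 0 = (ynat G k v)%:R.
Proof.
elim: k v => [|k IH] v.
  split.
  - rewrite /aR /Lnat natr_sum; apply: eq_bigr => j _ /=.
    rewrite /zeta0 /labnat mxE; case: insubP => [u uj vu|nj].
      by rewrite uj natrM natrX mulrC.
    by rewrite (negbTE nj) mul0r.
  - by rewrite /= /zeta0 mxE insubN // ltnn.
have Ey : (@zeta R l theN G k.+1 v) = comb (col_mx ((@zeta R l theN G k v)) (\sum_(w | adj v w) (@zeta R l theN G k w))) by [].
split.
  rewrite Ey /aR big1 // => j _; rewrite combE.
  case: ltnP => jl; last by rewrite mul0r.
  by rewrite (ltn_eqF jl) mulr0.
rewrite Ey combE /= eqxx.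
have -> : zR ((@zeta R l theN G k v)) (\sum_(w | adj v w) (@zeta R l theN G k w)) = (ex G k v)%:R.
  rewrite /zR summxE (IH v).2 (IH v).1.
  under eq_bigr do rewrite (IH _).2.
  rewrite -natr_sum /ex /Fnat.
  move: (aval k v) (ynat G k v) (\sum_(w | adj v w) ynat G k w) => a y S.
  move: KK => K; rewrite ?natrD ?natrM ?natrD ?natrM ?natrD; field.
  by [].
transitivity ((BB ^ ex G k v)%N%:R : R); last by [].
rewrite expRM_natl lnK ?natrX // posrE ltr0n //.
Qed.

Lemma Lnat_lt (G : graph l) (v : vert G) : (Lnat v < KK)%N.
Proof.
rewrite /Lnat /KK ltnS; apply: leq_sum => j _.
by rewrite /labnat; case: insub => [j'|] //=; case: (lab v j') => /=; rewrite ?mul1n ?mul0n.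
Qed.

Lemma aval_lt (G : graph l) k (v : vert G) : (aval k v < KK)%N.
Proof. by case: k => [|k] /=; [exact: Lnat_lt|]. Qed.

Lemma Lnat_inj (G G' : graph l) (v : vert G) (v' : vert G') :
  Lnat v = Lnat v' -> lab v = lab v'.
Proof.
move=> E.
have lt2 : forall (H : graph l) (u : vert H) j, (labnat u j < 2)%N.
  by move=> H u j; rewrite /labnat; case: insub => [j'|] //; case: (lab u j').
have D := digits (c := labnat v) (c' := labnat v') (isT : (0 < 2)%N)
  (lt2 G v) (lt2 G' v') E.
apply/ffunP => j.
have := D j (ltnW (ltn_ord j)).
rewrite /labnat valK.
by case: (lab v j); case: (lab v' j).
Qed.

Lemma sumB_nb (G : graph l) k (v : vert G) :
  sumB BB (map (ex G k) [seq w <- enum (vert G) | adj v w]) =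
  (\sum_(w | adj v w) ynat G k.+1 w)%N.
Proof.
rewrite /sumB -map_comp sumnE big_map big_filter.
by rewrite big_enum_cond.
Qed.

Lemma sumB_all (G : graph l) k :
  sumB BB (map (ex G k) (enum (vert G))) = (\sum_(w : vert G) ynat G k.+1 w)%N.
Proof.
rewrite /sumB -map_comp sumnE big_map.
by rewrite big_enum.
Qed.

Lemma ex_inj (n1 : (0 < n)%N) (G G' : graph l) k (v : vert G) (v' : vert G') :
  ynat G k.+1 v = ynat G' k.+1 v' -> ex G k v = ex G' k v'.
Proof.
rewrite !ynatS => /eqP; rewrite eqn_exp2l; first by move/eqP.
by rewrite /BB ltnS.
Qed.

Lemma CR_rel (n1 : (0 < n)%N) k (G G' : graph l) (v : vert G) (v' : vert G') :
  (#|vert G| <= n)%N -> (#|vert G'| <= n)%N ->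
  ynat G k.+1 v = ynat G' k.+1 v' -> @CR l G k v = @CR l G' k v'.
Proof.
move=> hG hG'.
elim: k v v' => [|k IH] v v' /(ex_inj n1).
  rewrite /ex /Fnat => /eqP; rewrite eqn_add2r => /eqP E.
  case: (pair_inj (aval_lt _ v) (aval_lt _ v') E) => Ea _ _.
  exact: Lnat_inj.
rewrite /ex /Fnat => /eqP; rewrite eqn_add2r => /eqP E.
case: (pair_inj (aval_lt _ v) (aval_lt _ v') E) => _ Ey ES.
rewrite /=; congr (_, _); first exact: IH.
apply/eq_seq_msetP.
apply: (perm_transfer (f := ex G k) (f' := ex G' k)).
  move=> a b _ _ eab; apply: IH; by rewrite !ynatS eab.
apply: (sumB_perm (B := BB)).
- rewrite size_map size_filter /BB ltnS (leq_trans (count_size _ _)) //.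
  by rewrite -cardT.
- rewrite size_map size_filter /BB ltnS (leq_trans (count_size _ _)) //.
  by rewrite -cardT.
- by rewrite !sumB_nb.
Qed.

End GNN.

Lemma perm_down l (G G' : graph l) s :
  perm_eq (map (@CR l G s.+1) (enum (vert G))) (map (@CR l G' s.+1) (enum (vert G'))) ->
  perm_eq (map (@CR l G s) (enum (vert G))) (map (@CR l G' s) (enum (vert G'))).
Proof.
move=> P; have := perm_map (fun x : crT l s.+1 => x.1) P.
by rewrite -!map_comp.
Qed.

Theorem corollary8p6 (R : realType) (l n : nat) :
  (1 <= n)%N ->
  exists N : rgnn R l,
    forall G G' : graph l,
      (#|vert G| <= n)%N -> (#|vert G'| <= n)%N ->
      CRinf_distinguishes G G' -> xi N n G <> xi N n G'.
Proof.
move=> n1; exists (@theN R l n) => G G' hG hG' D E.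
apply: (not_distinguished n1 hG hG' _ D).
have Z : forall (H : graph l) k (v : vert H),
    @zeta R l (@theN R l n) H k v ord_max ord0 = ((@ynat l n H k v)%:R : R)%R.
  by move=> H k v; exact: (@zeta_inv R l n H k v).2.
have Es : (\sum_(v : vert G) @ynat l n G n v = \sum_(v : vert G') @ynat l n G' n v)%N.
  move: E; rewrite /xi /= /gro !mul1mx !addr0 => /matrixP/(_ ord_max ord0).
  rewrite !mxE => /expR_inj; rewrite !summxE.
  have S : forall H : graph l, (\sum_(v : vert H) @zeta R l (@theN R l n) H n v ord_max ord0
     = ((\sum_(v : vert H) @ynat l n H n v)%N%:R : R))%R.
    by move=> H; rewrite natr_sum; apply: eq_bigr => v _; exact: Z.
  by rewrite !S => /eqP; rewrite eqr_nat => /eqP.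
have [m nm] : exists m, n = m.+1 by exists n.-1; rewrite prednK.
have Es' : (\sum_(v : vert G) @ynat l n G m.+1 v = \sum_(v : vert G') @ynat l n G' m.+1 v)%N.
  by rewrite -nm.
have P0 : perm_eq (map (@CR l G m) (enum (vert G))) (map (@CR l G' m) (enum (vert G'))).
  apply: (perm_transfer (f := @ex l n G m) (f' := @ex l n G' m)).
    move=> a b _ _ eab; apply: (@CR_rel l n n1 m G G' a b hG hG').
    by rewrite !ynatS eab.
  apply: (@sumB_perm (@BB n)).
  - by rewrite size_map -cardT /BB ltnS.
  - by rewrite size_map -cardT /BB ltnS.
  - by rewrite !sumB_all Es'.
have Pd : forall d, (d <= m)%N -> perm_eq (map (@CR l G (m - d)) (enum (vert G)))
                                   (map (@CR l G' (m - d)) (enum (vert G'))).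
  elim=> [|d IH] hd; first by rewrite subn0.
  have e : (m - d = (m - d.+1).+1)%N by rewrite subnS prednK // subn_gt0.
  by apply: perm_down; rewrite -e; apply: IH; apply: ltnW.
move=> s sn; have := Pd (m - s)%N (leq_subr _ _); rewrite subKn //.
by rewrite -ltnS -nm.
Qed.
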